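(* Consider the following TOPSIS procedure, parametrized by a metric $\rho$ on $\tilde{\mathbb{I}}$. Given $n$ alternatives $A_1,\dots,A_n$, $m$ attributes $\mathscr{O}_1,\dots,\mathscr{O}_m$ each classified as benefit or cost, an intuitionistic fuzzy decision matrix $R=(r_{ij})_{n\times m}$ with $r_{ij}=\langle\mu_{ij},\nu_{ij}\rangle\in\tilde{\mathbb{I}}$, real weights $\omega_j\in(0,1]$ with $\sum_j\omega_j=1$, and $\lambda\ge1$: (i) $\bar r_{ij}=\langle\bar\mu_{ij},\bar\nu_{ij}\rangle=r_{ij}$ for benefit attributes and $\bar r_{ij}=\langle\nu_{ij},\mu_{ij}\rangle$ for cost attributes; (ii) $\langle\mu_j^+,\nu_j^+\rangle=\langle\max_i\bar\mu_{ij},\min_i\bar\nu_{ij}\rangle$, $\langle\mu_j^-,\nu_j^-\rangle=\langle\min_i\bar\mu_{ij},\max_i\bar\nu_{ij}\rangle$; (iii) $\mathbf{S}(A_i,\mathbf{A}^{\pm})=1-\sum_{j=1}^m\omega_j\,\rho(\bar r_{ij},\langle\mu_j^{\pm},\nu_j^{\pm}\rangle)$; (iv) $\mathscr{C}_i=\frac{\mathbf{S}(A_i,\mathbf{A}^+)}{\mathbf{S}(A_i,\mathbf{A}^+)+\mathbf{S}(A_i,\mathbf{A}^-)}$. Then: (a) with $\rho=\tilde\varrho^{(\lambda)}$, the procedure is increasing with $\le_{ZX}$, i.e., if $\bar r_{i_1j}\le_{ZX}\bar r_{i_2j}$ for all $j$, then $\mathscr{C}_{i_1}\le\mathscr{C}_{i_2}$;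 (b) with $\rho=\varrho^{(\lambda)}_{A,B}$, the procedure is increasing with $\le_{A,B}$, i.e., if $\bar r_{i_1j}\le_{A,B}\bar r_{i_2j}$ for all $j$, then $\mathscr{C}_{i_1}\le\mathscr{C}_{i_2}$.
   Context: $\tilde{\mathbb{I}}=\{\langle\mu,\nu\rangle\in[0,1]^2\mid\mu+\nu\le1\}$. For $\alpha=\langle\mu_\alpha,\nu_\alpha\rangle$: $h(\alpha)=\mu_\alpha+\nu_\alpha$, $\pi_\alpha=1-\mu_\alpha-\nu_\alpha$, $L(\alpha)=\frac{1-\nu_\alpha}{1+\pi_\alpha}$. Order $\le_{ZX}$: $\alpha<_{ZX}\beta$ if $L(\alpha)<L(\beta)$, or $L(\alpha)=L(\beta)$ and $h(\alpha)<h(\beta)$; $\alpha\le_{ZX}\beta$ means $\alpha<_{ZX}\beta$ or $\alpha=\beta$. $\tilde\varrho^{(\lambda)}(\alpha,\beta)=\frac{1}{1+\lambda}(1+\lambda|L(\alpha)-L(\beta)|)$ if $L(\alpha)\ne L(\beta)$, and $=\frac{1}{1+\lambda}|h(\alpha)-h(\beta)|$ otherwise. An aggregation function is $A:[0,1]^2\to[0,1]$ nondecreasing in each variable with $A(0,0)=0$, $A(1,1)=1$. $A,B$ are continuous aggregation functions such that $A(x_1,y_1)=A(x_2,y_2)$ and $B(x_1,y_1)=B(x_2,y_2)$ together imply $(x_1,y_1)=(x_2,y_2)$. Put $\overline{A}(\alpha)=A(\mu_\alpha,1-\nu_\alpha)$, $\overline{B}(\alpha)=B(\mu_\alpha,1-\nu_\alpha)$.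 Order $\le_{A,B}$: $\alpha\le_{A,B}\beta$ iff $\overline{A}(\alpha)<\overline{A}(\beta)$ or ($\overline{A}(\alpha)=\overline{A}(\beta)$ and $\overline{B}(\alpha)\le\overline{B}(\beta)$). $\varrho^{(\lambda)}_{A,B}(\alpha,\beta)=\frac12(1+|\overline{A}(\alpha)-\overline{A}(\beta)|)$ if $\overline{A}(\alpha)\ne\overline{A}(\beta)$, and $=\frac12|\overline{B}(\alpha)-\overline{B}(\beta)|$ otherwise. *)

(* Defs.v *)
From HB Require Import structures.
From mathcomp Require Import all_boot all_order all_algebra.
From mathcomp Require Import all_classical all_reals all_analysis.
Set Implicit Arguments. Unset Strict Implicit. Unset Printing Implicit Defensive.
Import Order.TTheory GRing.Theory Num.Theory.
Import numFieldNormedType.Exports.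
Local Open Scope ring_scope.

Section IFN.
Variable R : realType.

(* An intuitionistic fuzzy value <mu, nu> is a pair; membership in I~. *)
Definition IFN := (R * R)%type.
Definition inI (a : IFN) : Prop := 0 <= a.1 /\ 0 <= a.2 /\ a.1 + a.2 <= 1.

Definition hI (a : IFN) : R := a.1 + a.2.
Definition piI (a : IFN) : R := 1 - a.1 - a.2.
Definition LI (a : IFN) : R := (1 - a.2) / (1 + piI a).

Definition ltZX (a b : IFN) : Prop :=
  LI a < LI b \/ (LI a = LI b /\ hI a < hI b).
Definition leZX (a b : IFN) : Prop := ltZX a b \/ a = b.

Definition rhoZX (lam : R) (a b : IFN) : R :=
  if LI a != LI b then (1 + lam * `|LI a - LI b|) / (1 + lam)
  else `|hI a - hI b| / (1 + lam).

(* A-bar, B-bar, order <=_{A,B} and the metric rho_{A,B}^(lambda)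
   (whose defining formula does not involve lambda). *)
Definition barF (A : R -> R -> R) (a : IFN) : R := A a.1 (1 - a.2).
Definition leAB (A B : R -> R -> R) (a b : IFN) : Prop :=
  barF A a < barF A b \/ (barF A a = barF A b /\ barF B a <= barF B b).
Definition rhoAB (A B : R -> R -> R) (a b : IFN) : R :=
  if barF A a != barF A b then (1 + `|barF A a - barF A b|) / 2
  else `|barF B a - barF B b| / 2.

Definition unit_sq : set (R * R) :=
  [set p | 0 <= p.1 <= 1 /\ 0 <= p.2 <= 1].
Definition is_cont_aggregation (A : R -> R -> R) : Prop :=
  (forall x y, 0 <= x <= 1 -> 0 <= y <= 1 -> 0 <= A x y <= 1) /\
      (forall x1 x2 y, 0 <= x1 -> x1 <= x2 -> x2 <= 1 -> 0 <= y <= 1 ->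
          A x1 y <= A x2 y) /\
      (forall x y1 y2, 0 <= x <= 1 -> 0 <= y1 -> y1 <= y2 -> y2 <= 1 ->
          A x y1 <= A x y2) /\
      A 0 0 = 0 /\ A 1 1 = 1 /\
      {within unit_sq, continuous (fun p : R * R => A p.1 p.2)}%classic.

Section Topsis.
Variables (n m : nat) (benefit : 'I_m -> bool) (r : 'I_n -> 'I_m -> IFN)
  (w : 'I_m -> R) (rho : IFN -> IFN -> R).

Definition rbar (i : 'I_n) (j : 'I_m) : IFN :=
  if benefit j then r i j else ((r i j).2, (r i j).1).

(* values lie in [0,1], so 0 (resp. 1) is a neutral start for max (resp. min) *)
Definition ideal_pos (j : 'I_m) : IFN :=
  (\big[Num.max/0]_(i < n) (rbar i j).1, \big[Num.min/1]_(i < n) (rbar i j).2).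
Definition ideal_neg (j : 'I_m) : IFN :=
  (\big[Num.min/1]_(i < n) (rbar i j).1, \big[Num.max/0]_(i < n) (rbar i j).2).

Definition Sim (i : 'I_n) (ideal : 'I_m -> IFN) : R :=
  1 - \sum_(j < m) w j * rho (rbar i j) (ideal j).

Definition closeness (i : 'I_n) : R :=
  Sim i ideal_pos / (Sim i ideal_pos + Sim i ideal_neg).
End Topsis.

End IFN.

(* Main.v *)
Require Import Defs.
From HB Require Import structures.
From mathcomp Require Import all_boot all_order all_algebra.
From mathcomp Require Import all_classical all_reals all_analysis.
From mathcomp Require Import ring lra.
Import Order.TTheory GRing.Theory Num.Theory.
Import numFieldNormedType.Exports.
Local Open Scope ring_scope.

Section H.
Variable R : realType.

Lemma absle {x y : R} : x <= y -> `|x - y| = y - x.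
Proof. by move=> h; rewrite distrC ger0_norm // subr_ge0. Qed.

Lemma frac_mono (x1 x2 y1 y2 : R) : 0 <= x1 -> x1 <= x2 -> 0 <= y2 -> y2 <= y1 ->
  x1 / (x1 + y1) <= x2 / (x2 + y2).
Proof.
move=> h1 h2 h3 h4.
have [E1|E1] := eqVneq (x1 + y1) 0.
  rewrite E1 invr0 mulr0 divr_ge0 //; lra.
have [E2|E2] := eqVneq (x2 + y2) 0.
  have -> : x1 = 0 by lra.
  by rewrite E2 invr0 !mulr0 mul0r.
have p1 : 0 < x1 + y1 by rewrite lt0r E1 /=; lra.
have p2 : 0 < x2 + y2 by rewrite lt0r E2 /=; lra.
rewrite -subr_ge0.
have -> : x2 / (x2 + y2) - x1 / (x1 + y1) = (x2 * y1 - x1 * y2) / ((x2+y2)*(x1+y1)).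
  by field; rewrite E1 E2.
apply: divr_ge0; last by apply: mulr_ge0; lra.
nra.
Qed.

Lemma L_mono (x y : IFN R) : inI x -> inI y -> x.1 <= y.1 -> y.2 <= x.2 ->
  LI x <= LI y /\ (LI x = LI y -> x = y).
Proof.
case: x => mu nu; case: y => P1 P2; rewrite /inI /LI /piI /= => hx hy h1 h2.
have dx : 0 < 1 + (1 - mu - nu) by lra.
have dy : 0 < 1 + (1 - P1 - P2) by lra.
have E : (1 - P2) / (1 + (1 - P1 - P2)) - (1 - nu) / (1 + (1 - mu - nu)) =
   ((P2 - nu) * (mu - 1) + (1 - nu) * (P1 - mu)) / ((1 + (1 - P1 - P2)) * (1 + (1 - mu - nu))).
  by field; apply/andP; split; rewrite gt_eqF.
have g1 : 0 <= (P2 - nu) * (mu - 1) by nra.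
have g2 : 0 <= (1 - nu) * (P1 - mu) by nra.
split.
  rewrite -subr_ge0 E divr_ge0 //; [lra| apply: mulr_ge0; lra].
move=> eqL.
have : ((P2 - nu) * (mu - 1) + (1 - nu) * (P1 - mu)) = 0.
  have : ((P2 - nu) * (mu - 1) + (1 - nu) * (P1 - mu)) / ((1 + (1 - P1 - P2)) * (1 + (1 - mu - nu))) = 0 by rewrite -E eqL subrr.
  move/eqP; rewrite mulf_eq0 invr_eq0 mulf_eq0 (gt_eqF dx) (gt_eqF dy) !orbF; by move/eqP.
move=> S.
have e1 : (P2 - nu) * (mu - 1) = 0 by lra.
have e2 : (1 - nu) * (P1 - mu) = 0 by lra.
move/eqP: e1; rewrite mulf_eq0 => /orP[/eqP a|/eqP a].
  move/eqP: e2; rewrite mulf_eq0 => /orP[/eqP b|/eqP b].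
    congr pair; lra.
  congr pair; lra.
congr pair; lra.
Qed.

Lemma rhoZX_ge0 (lam : R) a b : 0 <= lam -> 0 <= rhoZX lam a b.
Proof.
move=> hl; rewrite /rhoZX; case: ifP => _; apply: divr_ge0; try lra.
- by apply: addr_ge0 => //; apply: mulr_ge0.
- by [].
Qed.

Lemma rhoZX_pos (lam : R) a b p : 0 <= lam ->
  LI a <= LI p -> LI b <= LI p -> (LI b = LI p -> b = p) -> leZX a b ->
  rhoZX lam b p <= rhoZX lam a p.
Proof.
move=> hl hap hbp eqb hab.
have hLab : LI a <= LI b.
  by case: hab => [[h|[h _]]|->] //; [exact: ltW|rewrite h].
have [E|E] := eqVneq (LI b) (LI p).
  rewrite (eqb E) /rhoZX eqxx /= subrr normr0 mul0r; exact: rhoZX_ge0.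
have lbp : LI b < LI p by rewrite lt_neqAle E.
have lap : LI a < LI p by apply: le_lt_trans lbp.
rewrite /rhoZX E (lt_eqF lap) /= (absle (ltW lbp)) (absle (ltW lap)).
apply: ler_wpM2r; first by rewrite invr_ge0; lra.
nra.
Qed.

Lemma rhoZX_neg (lam : R) a b q : 0 <= lam ->
  LI q <= LI a -> LI q <= LI b -> (LI a = LI q -> a = q) -> leZX a b ->
  rhoZX lam a q <= rhoZX lam b q.
Proof.
move=> hl hap hbp eqa hab.
have hLab : LI a <= LI b.
  by case: hab => [[h|[h _]]|->] //; [exact: ltW|rewrite h].
have [E|E] := eqVneq (LI a) (LI q).
  rewrite (eqa E) /rhoZX eqxx /= subrr normr0 mul0r; exact: rhoZX_ge0.
have lbp : LI q < LI a by rewrite lt_neqAle eq_sym E.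
have lap : LI q < LI b by apply: lt_le_trans lbp _.
rewrite /rhoZX E (gt_eqF lap) /= distrC (absle (ltW lbp)) distrC (absle (ltW lap)).
apply: ler_wpM2r; first by rewrite invr_ge0; lra.
nra.
Qed.

Lemma L01 (x : IFN R) : inI x -> 0 <= LI x <= 1.
Proof.
case: x => mu nu; rewrite /inI /LI /piI /= => hx.
have d : 0 < 1 + (1 - mu - nu) by lra.
apply/andP; split; first by apply: divr_ge0; lra.
by rewrite ler_pdivrMr // mul1r; lra.
Qed.

Lemma rhoZX_le1 (lam : R) a b : 0 <= lam -> inI a -> inI b -> rhoZX lam a b <= 1.
Proof.
move=> hl ha hb; have /andP[a0 a1] := L01 _ ha; have /andP[b0 b1] := L01 _ hb.
have d : 0 < 1 + lam by lra.
rewrite /rhoZX; case: ifP => _; rewrite ler_pdivrMr // mul1r.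
  have : `|LI a - LI b| <= 1.
    by case: (lerP (LI a) (LI b)) => h; lra.
  nra.
move: ha hb; rewrite /inI /hI => ha hb.
case: (lerP (hI a) (hI b)) => h; rewrite /hI; lra.
Qed.

Lemma rhoAB_ge0 A B (a b : IFN R) : 0 <= rhoAB A B a b.
Proof. by rewrite /rhoAB; case: ifP => _; apply: divr_ge0 => //; apply: addr_ge0. Qed.

Lemma rhoAB_le1 A B (a b : IFN R) :
  0 <= barF A a <= 1 -> 0 <= barF A b <= 1 ->
  0 <= barF B a <= 1 -> 0 <= barF B b <= 1 -> rhoAB A B a b <= 1.
Proof.
rewrite /rhoAB => /andP[? ?] /andP[? ?] /andP[? ?] /andP[? ?].
case: ifP => _; rewrite ler_pdivrMr // mul1r.
  by case: (lerP (barF A a) (barF A b)) => h; lra.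
by case: (lerP (barF B a) (barF B b)) => h; lra.
Qed.

Lemma rhoAB_pos A B (a b p : IFN R) : leAB A B a b ->
  barF A b <= barF A p -> barF B b <= barF B p ->
  0 <= barF B b <= 1 -> 0 <= barF B p <= 1 ->
  rhoAB A B b p <= rhoAB A B a p.
Proof.
rewrite /leAB /rhoAB => hab h1 h2 /andP[? ?] /andP[? ?].
have [E|E] := eqVneq (barF A b) (barF A p); rewrite /=.
  have [E'|E'] := eqVneq (barF A a) (barF A p); rewrite /=.
    case: hab => [|[_ h]]; first lra.
    rewrite ler_pM2r ?invr_gt0 //.
    by case: (lerP (barF B b) (barF B p)) => h3; case: (lerP (barF B a) (barF B p)) => h4; lra.
  rewrite ler_pM2r ?invr_gt0 //.
  by case: (lerP (barF B b) (barF B p)) => h3; case: (lerP (barF A a) (barF A p)) => h4; lra.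
have hap : barF A a != barF A p.
  apply/eqP => e; case: hab => [|[h _]]; lra.
rewrite hap /= ler_pM2r ?invr_gt0 //.
by case: (lerP (barF A b) (barF A p)) => h3; case: (lerP (barF A a) (barF A p)) => h4; case: hab; lra.
Qed.

Lemma rhoAB_neg A B (a b q : IFN R) : leAB A B a b ->
  barF A q <= barF A a -> barF B q <= barF B a ->
  0 <= barF B a <= 1 -> 0 <= barF B q <= 1 ->
  rhoAB A B a q <= rhoAB A B b q.
Proof.
rewrite /leAB /rhoAB => hab h1 h2 /andP[? ?] /andP[? ?].
have [E|E] := eqVneq (barF A a) (barF A q); rewrite /=.
  have [E'|E'] := eqVneq (barF A b) (barF A q); rewrite /=.
    case: hab => [|[_ h]]; first lra.
    rewrite ler_pM2r ?invr_gt0 //.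
    by case: (lerP (barF B b) (barF B q)) => h3; case: (lerP (barF B a) (barF B q)) => h4; lra.
  rewrite ler_pM2r ?invr_gt0 //.
  by case: (lerP (barF B a) (barF B q)) => h3; case: (lerP (barF A b) (barF A q)) => h4; lra.
have hbq : barF A b != barF A q.
  apply/eqP => e; case: hab => [|[h _]]; move/eqP: E; lra.
rewrite hbq /= ler_pM2r ?invr_gt0 //.
by case: (lerP (barF A b) (barF A q)) => h3; case: (lerP (barF A a) (barF A q)) => h4; case: hab; move/eqP: E; lra.
Qed.

Lemma barF_bound A (hA : is_cont_aggregation A) (a : IFN R) : inI a -> 0 <= barF A a <= 1.
Proof.
case: hA => h _; case: a => mu nu; rewrite /inI /barF /= => ha.
apply: h; apply/andP; split; lra.
Qed.

Lemma barF_mono A (hA : is_cont_aggregation A) (a b : IFN R) : inI a -> inI b ->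
  a.1 <= b.1 -> b.2 <= a.2 -> barF A a <= barF A b.
Proof.
case: hA => _ [h1 [h2 _]]; case: a => mu nu; case: b => P1 P2.
rewrite /inI /barF /= => ha hb l1 l2.
apply: (@le_trans _ _ (A P1 (1 - nu))).
  apply: h1; try lra; apply/andP; split; lra.
apply: h2; try lra; apply/andP; split; lra.
Qed.

Section Top.
Variables (n m : nat) (benefit : 'I_m -> bool) (r : 'I_n -> 'I_m -> IFN R).
Hypothesis hr : forall i j, inI (r i j).

Lemma rbar_inI i j : inI (rbar benefit r i j).
Proof.
rewrite /rbar; case: (benefit j); first exact: hr.
by move: (hr i j); rewrite /inI /=; lra.
Qed.

Lemma col_facts i j :
  inI (ideal_pos benefit r j) /\ inI (ideal_neg benefit r j) /\
  (rbar benefit r i j).1 <= (ideal_pos benefit r j).1 /\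
  (ideal_pos benefit r j).2 <= (rbar benefit r i j).2 /\
  (ideal_neg benefit r j).1 <= (rbar benefit r i j).1 /\
  (rbar benefit r i j).2 <= (ideal_neg benefit r j).2.
Proof.
have hI k : inI (rbar benefit r k j) by exact: rbar_inI.
rewrite /ideal_pos /ideal_neg /=.
set P1 := \big[Num.max/0]_(i < n) (rbar benefit r i j).1.
set P2 := \big[Num.min/1]_(i < n) (rbar benefit r i j).2.
set Q1 := \big[Num.min/1]_(i < n) (rbar benefit r i j).1.
set Q2 := \big[Num.max/0]_(i < n) (rbar benefit r i j).2.
have a1 k : (rbar benefit r k j).1 <= P1 by apply: le_bigmax.
have a2 k : P2 <= (rbar benefit r k j).2 by apply: bigmin_le.
have a3 k : Q1 <= (rbar benefit r k j).1 by apply: bigmin_le.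
have a4 k : (rbar benefit r k j).2 <= Q2 by apply: le_bigmax.
have p10 : 0 <= P1 by apply: bigmax_ge_id.
have q20 : 0 <= Q2 by apply: bigmax_ge_id.
have p21 : P2 <= 1 by apply: bigmin_le_id.
have q11 : Q1 <= 1 by apply: bigmin_le_id.
have p20 : 0 <= P2 by apply: le_bigmin => // k _; case: (hI k) => ? [].
have q10 : 0 <= Q1 by apply: le_bigmin => // k _; case: (hI k).
have p12 : P1 <= 1 - P2.
  apply: bigmax_le => [|k _]; first lra.
  have := a2 k; case: (hI k) => ? [? ?]; lra.
have q12 : Q2 <= 1 - Q1.
  apply: bigmax_le => [|k _]; first lra.
  have := a3 k; case: (hI k) => ? [? ?]; lra.
rewrite /inI /=; do ![split] => //; lra.
Qed.
End Top.

Lemma topsis n m benefit (r : 'I_n -> 'I_m -> IFN R) (w : 'I_m -> R) rho i1 i2 :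
 (forall j, 0 <= w j) -> \sum_(j < m) w j = 1 ->
 (forall i j, 0 <= rho (rbar benefit r i j) (ideal_pos benefit r j) <= 1) ->
 (forall i j, 0 <= rho (rbar benefit r i j) (ideal_neg benefit r j) <= 1) ->
 (forall j, rho (rbar benefit r i2 j) (ideal_pos benefit r j) <=
            rho (rbar benefit r i1 j) (ideal_pos benefit r j)) ->
 (forall j, rho (rbar benefit r i1 j) (ideal_neg benefit r j) <=
            rho (rbar benefit r i2 j) (ideal_neg benefit r j)) ->
 closeness benefit r w rho i1 <= closeness benefit r w rho i2.
Proof.
move=> hw hs hp hn h1 h2; rewrite /closeness.
have S0 i id : (forall j, 0 <= rho (rbar benefit r i j) (id j) <= 1) -> 0 <= Sim benefit r w rho i id.
  move=> hb; rewrite /Sim subr_ge0 -[X in _ <= X]hs; apply: ler_sum => j _.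
  rewrite -{2}(mulr1 (w j)); apply: ler_wpM2l => //; by case/andP: (hb j).
apply: frac_mono.
- exact: S0.
- rewrite /Sim lerD2l lerN2; apply: ler_sum => j _; exact: ler_wpM2l.
- exact: S0.
- rewrite /Sim lerD2l lerN2; apply: ler_sum => j _; exact: ler_wpM2l.
Qed.
End H.

Theorem theorem7 (R : realType) (n m : nat) (benefit : 'I_m -> bool)
  (r : 'I_n -> 'I_m -> IFN R) (w : 'I_m -> R) (lam : R)
  (A B : R -> R -> R) :
  (forall i j, inI (r i j)) ->
  (forall j, 0 < w j <= 1) ->
  \sum_(j < m) w j = 1 ->
  1 <= lam ->
  is_cont_aggregation A -> is_cont_aggregation B ->
  (forall x1 y1 x2 y2 : R, 0 <= x1 <= 1 -> 0 <= y1 <= 1 ->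
     0 <= x2 <= 1 -> 0 <= y2 <= 1 ->
     A x1 y1 = A x2 y2 -> B x1 y1 = B x2 y2 -> (x1, y1) = (x2, y2)) ->
  (forall i1 i2 : 'I_n,
     (forall j, leZX (rbar benefit r i1 j) (rbar benefit r i2 j)) ->
     closeness benefit r w (rhoZX lam) i1 <= closeness benefit r w (rhoZX lam) i2)
  /\
  (forall i1 i2 : 'I_n,
     (forall j, leAB A B (rbar benefit r i1 j) (rbar benefit r i2 j)) ->
     closeness benefit r w (rhoAB A B) i1 <= closeness benefit r w (rhoAB A B) i2).
Proof.
move=> hr hw hs hl hA hB _.
have hw0 j : 0 <= w j by case/andP: (hw j) => /ltW.
have l0 : 0 <= lam by lra.
have rI i j : inI (rbar benefit r i j) by apply: rbar_inI.
have cf i j := @col_facts R n m benefit r hr i j.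
split=> i1 i2 H; apply: topsis => //.
- move=> i j; have [hp _] := cf i j.
  by rewrite rhoZX_ge0 ?rhoZX_le1.
- move=> i j; have [_ [hq _]] := cf i j.
  by rewrite rhoZX_ge0 ?rhoZX_le1.
- move=> j; have [hp [_ [b1 [b2 _]]]] := cf i2 j; have [_ [_ [c1 [c2 _]]]] := cf i1 j.
  have [Lb Eb] := @L_mono R _ _ (rI i2 j) hp b1 b2.
  have [La _] := @L_mono R _ _ (rI i1 j) hp c1 c2.
  apply: rhoZX_pos => // e; exact/esym/Eb.
- move=> j; have [_ [hq [_ [_ [b1 b2]]]]] := cf i2 j; have [_ [_ [_ [_ [c1 c2]]]]] := cf i1 j.
  have [Lb _] := @L_mono R _ _ hq (rI i2 j) b1 b2.
  have [La Ea] := @L_mono R _ _ hq (rI i1 j) c1 c2.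
  apply: rhoZX_neg => // e; exact: (esym (Ea (esym e))).
- move=> i j; have [hp _] := cf i j.
  by rewrite rhoAB_ge0 rhoAB_le1 // barF_bound.
- move=> i j; have [_ [hq _]] := cf i j.
  by rewrite rhoAB_ge0 rhoAB_le1 // barF_bound.
- move=> j; have [hp [_ [b1 [b2 _]]]] := cf i2 j.
  apply: rhoAB_pos => //; try exact: barF_mono; exact: barF_bound.
- move=> j; have [_ [hq [_ [_ [b1 b2]]]]] := cf i1 j.
  apply: rhoAB_neg => //; try exact: barF_mono; exact: barF_bound.
Qed.
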